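(* Let $R:X\leftrightarrow\mathcal{P}Y$, $S:Y\leftrightarrow\mathcal{P}Z$, $T:Z\leftrightarrow\mathcal{P}W$ be multirelations and suppose $R$ is inner deterministic. Then (1) $R\ast S=R\,1_Y^{\smile}\,S$; (2) $R\ast(S\ast T)=(R\ast S)\ast T$.
   Context: Relations $R\subseteq X\times Y$ are written $R:X\leftrightarrow Y$; composition $RS$ is diagrammatic relational composition and $R^{\smile}$ is the converse. A multirelation is a relation $X\leftrightarrow\mathcal{P}Y$. $1_Y=\{(b,\{b\})\mid b\in Y\}$. $R$ is inner deterministic if every $(a,B)\in R$ has $B$ a singleton. The Peleg composition of $R:X\leftrightarrow\mathcal{P}Y$ and $S:Y\leftrightarrow\mathcal{P}Z$ is $R\ast S=\{(a,C)\mid\exists B.\ (a,B)\in R\wedge\exists f:Y\to\mathcal{P}Z.\ (\forall b\in B.\ (b,f(b))\in S)\wedge C=\bigcup_{b\in B}f(b)\}$. *)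

(* Defs.v *)
From mathcomp Require Import all_boot.
From mathcomp Require Export classical_sets.
Set Implicit Arguments. Unset Strict Implicit. Unset Printing Implicit Defensive.
Local Open Scope classical_set_scope.

Definition Rel (X Y : Type) := X -> Y -> Prop.
Definition MRel (X Y : Type) := Rel X (set Y).

Definition rcomp (X Y Z : Type) (R : Rel X Y) (S : Rel Y Z) : Rel X Z :=
  fun a c => exists b, R a b /\ S b c.
Definition rconv (X Y : Type) (R : Rel X Y) : Rel Y X := fun b a => R a b.
Definition munit (Y : Type) : MRel Y Y := fun b B => B = [set b].
Definition inner_det (X Y : Type) (R : MRel X Y) : Prop :=
  forall a B, R a B -> exists b, B = [set b].
Definition peleg (X Y Z : Type) (R : MRel X Y) (S : MRel Y Z) : MRel X Z :=
  fun a C => exists B, R a B /\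
    exists f : Y -> set Z, (forall b, B b -> S b (f b)) /\
      C = \bigcup_(b in B) f b.

(* Main.v *)
Require Import Defs.
From mathcomp Require Import classical_sets.
From mathcomp Require Import all_boot boolp.
Local Open Scope classical_set_scope.

Lemma peleg_det (X Y Z : Type) (R : MRel X Y) (S : MRel Y Z) a C :
  inner_det R -> (peleg R S a C <-> exists b, R a [set b] /\ S b C).
Proof.
move=> hR; split.
- move=> [B [RB [f [Hf ->]]]].
  have [b Bb] := hR _ _ RB; subst B.
  exists b; split => //; rewrite bigcup_set1; exact: Hf.
- move=> [b [Rb Sb]]; exists [set b]; split => //.
  exists (fun _ => C); split; first by move=> y ->.
  by rewrite bigcup_set1.
Qed.

Theorem lemma3p10 (X Y Z W : Type) (R : MRel X Y) (S : MRel Y Z) (T : MRel Z W) :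
  inner_det R ->
  peleg R S = rcomp (rcomp R (rconv (@munit Y))) S /\
  peleg R (peleg S T) = peleg (peleg R S) T.
Proof.
move=> hR; split.
- apply/funext => a; apply/funext => C; apply/propext.
  rewrite peleg_det //; split.
  + move=> [b [Rb Sb]]; exists b; split => //; exists [set b]; split => //.
  + move=> [b [[B [RB HB]] Sb]]; exists b; split => //.
    by rewrite /rconv /munit in HB; rewrite -HB.
- apply/funext => a; apply/funext => D; apply/propext.
  rewrite peleg_det //; split.
  + move=> [b [Rb [C [SC [g [Hg ->]]]]]].
    exists C; split; last by exists g.
    by apply/peleg_det => //; exists b.
  + move=> [C [/(@peleg_det _ _ _ R S a C hR) [b [Rb SC]] [g [Hg ->]]]].
    exists b; split => //; exists C; split => //; exists g; split => //.
Qed.
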